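(* Let $V$ be a nonempty finite set, $C$ a partition of $V$, $k>0$, $G=(V,E)$ the clique graph of $C$ with edge weight $k$, and $0<\beta<1$. Let $\epsilon=\min(\beta,1-\beta,1/|V|)/2$. Then for a clustering $D$ of $V$: if $D=C$ then $\sum_{d\in D}\left(\frac{w_d}{v_d}-\beta\right)=(1-\beta)|C|$, while if $D\neq C$ then $\sum_{d\in D}\left(\frac{w_d}{v_d}-\beta\right)<(1-\beta)|C|-\epsilon$.
   Context: A clustering of $V$ is a partition of $V$ into nonempty pairwise disjoint sets. The clique graph of a partition $C$ of $V$ with edge weight $k$ is $G=(V,E)$ with $E(i,j)=k$ if $i$ and $j$ lie in the same block of $C$ (including $i=j$) and $E(i,j)=0$ otherwise. For $d\subseteq V$: $v_d=\sum_{i\in d}\sum_{j\in V}E(i,j)$ and $w_d=\sum_{i,j\in d}E(i,j)$. *)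

(* Defs.v *)
From mathcomp Require Import all_boot all_order all_algebra.
Set Implicit Arguments. Unset Strict Implicit. Unset Printing Implicit Defensive.
Import Order.TTheory GRing.Theory Num.Theory.
Local Open Scope ring_scope.

Definition clustering (T : finType) (P : {set {set T}}) : bool :=
  partition P [set: T].

(* Clique graph of the partition C with edge weight k:
   E i j = k if i and j lie in the same block of C (including i = j), 0 otherwise. *)
Definition clique_graph (R : numDomainType) (T : finType) (C : {set {set T}})
  (k : R) (i j : T) : R :=
  if [exists c in C, (i \in c) && (j \in c)] then k else 0.

Definition vol (R : numDomainType) (T : finType) (E : T -> T -> R) (d : {set T}) : R :=
  \sum_(i in d) \sum_(j : T) E i j.

Definition wgt (R : numDomainType) (T : finType) (E : T -> T -> R) (d : {set T}) : R :=
  \sum_(i in d) \sum_(j in d) E i j.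

(* Main.v *)
Require Import Defs.
From mathcomp Require Import all_boot all_order all_algebra.
From mathcomp Require Import ring lra.
Import Order.TTheory GRing.Theory Num.Theory.
Local Open Scope ring_scope.
Set Implicit Arguments. Unset Strict Implicit.

Section Helpers.
Variables (R : realFieldType) (T : finType) (C : {set {set T}}).
Hypothesis HC : partition C [set: T].

Local Notation f := (pblock C).

Lemma covC : cover C = [set: T].
Proof. by case/and3P: HC => /eqP. Qed.
Lemma trivC : trivIset C.
Proof. by case/and3P: HC. Qed.
Lemma fin i : i \in f i.
Proof. by rewrite mem_pblock covC inE. Qed.
Lemma fC i : f i \in C.
Proof. by apply: pblock_mem; rewrite covC inE. Qed.
Lemma fdef c i : c \in C -> i \in c -> f i = c.
Proof. exact: def_pblock trivC. Qed.
Lemma fsame i j : j \in f i -> f j = f i.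
Proof. exact: fdef (fC i). Qed.

Lemma E_eq (k : R) i j : clique_graph C k i j = if j \in f i then k else 0.
Proof.
rewrite /clique_graph; case: existsP => [[c /andP[cC /andP[ic jc]]]|no].
  by rewrite (fdef cC ic) jc.
case: ifP => // jf; exfalso; apply: no; exists (f i).
by rewrite fC fin jf.
Qed.

Definition I i j : R := if j \in f i then 1 else 0.
Definition n i : R := #|f i|%:R.
Definition X (d : {set T}) := \sum_(i in d) \sum_(j in d) I i j.
Definition Y (d : {set T}) := \sum_(i in d) n i.
Definition s (d : {set T}) := \sum_(i in d) (n i)^-1.

Lemma nI i : \sum_j I i j = n i.
Proof. by rewrite /I -big_mkcond /= sumr_const. Qed.

Lemma n_gt0 i : 0 < n i.
Proof. by rewrite /n ltr0n; apply/card_gt0P; exists i; exact: fin. Qed.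

Lemma n_le i : n i <= #|T|%:R.
Proof. by rewrite /n ler_nat; apply: max_card. Qed.

Lemma nsame i j : j \in f i -> n j = n i.
Proof. by move=> H; rewrite /n (fsame H). Qed.

Lemma I_ge0 i j : 0 <= I i j.
Proof. by rewrite /I; case: ifP. Qed.

Lemma Ypos d : d != set0 -> 0 < Y d.
Proof.
case/set0Pn => i id; rewrite /Y (bigD1 i) //=.
apply: ltr_wpDr; last exact: n_gt0.
by apply: sumr_ge0 => j _; apply: ltW; apply: n_gt0.
Qed.

Lemma K1 d : X d <= Y d.
Proof.
rewrite /X /Y; apply: ler_sum => i _; rewrite -nI big_mkcond /=.
apply: ler_sum => j _; case: ifP => _ //; exact: I_ge0.
Qed.

Lemma Ys d : Y d * s d = \sum_(i in d) \sum_(j in d) (n j / n i).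
Proof.
rewrite /s mulr_sumr; apply: eq_bigr => i _; rewrite /Y mulr_suml //.
Qed.

Lemma K2 d : X d <= Y d * s d.
Proof.
rewrite Ys; apply: ler_sum => i _; apply: ler_sum => j _.
rewrite /I; case: ifP => H.
  by rewrite (nsame H) divff // gt_eqF // n_gt0.
by apply: divr_ge0; apply: ltW; apply: n_gt0.
Qed.

Lemma K3 (d : {set T}) i0 j0 : i0 \in d -> j0 \in d -> j0 \notin f i0 ->
  X d + Y d / #|T|%:R <= Y d * s d.
Proof.
move=> i0d j0d nj.
have h1 : Y d / #|T|%:R <= \sum_(i in d) \sum_(j in d)
   (if j \in f i then 0 else n j / #|T|%:R).
  rewrite exchange_big /= /Y mulr_suml; apply: ler_sum => j jd.
  have [i [id ji]] : exists i, i \in d /\ j \notin f i.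
    case: (boolP (j \in f i0)) => H; last by exists i0.
    exists j0; split => //; apply/negP => H2.
    by move: nj; rewrite -(fsame H) (fsame H2) fin.
  rewrite (bigD1 i) //= (negbTE ji) lerDl.
  apply: sumr_ge0 => l _; case: ifP => _ //.
  by apply: divr_ge0; [apply: ltW; apply: n_gt0 | apply: ler0n].
apply: le_trans (_ : X d + \sum_(i in d) \sum_(j in d)
   (if j \in f i then 0 else n j / #|T|%:R) <= _).
  by rewrite lerD2l.
rewrite Ys /X -big_split /=; apply: ler_sum => i _.
rewrite -big_split /=; apply: ler_sum => j _.
rewrite /I; case: ifP => H.
  by rewrite (nsame H) divff ?addr0 // gt_eqF // n_gt0.
rewrite add0r; apply: ler_wpM2l; first by apply: ltW; apply: n_gt0.
have T0 : 0 < #|T|%:R :> R by apply: lt_le_trans (n_le i); apply: n_gt0.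
by rewrite lef_pV2 ?posrE ?n_gt0 // n_le.
Qed.

Lemma K4 (d : {set T}) i0 j1 : i0 \in d -> (forall j, j \in d -> j \in f i0) ->
  j1 \in f i0 -> j1 \notin d -> X d + Y d / #|T|%:R <= Y d.
Proof.
move=> i0d sub j1f j1d.
rewrite /Y mulr_suml /X -big_split /=; apply: ler_sum => i id.
have fi : f i = f i0 by apply: fsame; apply: sub.
have T0 : 0 < #|T|%:R :> R by apply: lt_le_trans (n_le i); apply: n_gt0.
have h : n i / #|T|%:R <= 1 by rewrite ler_pdivrMr // mul1r n_le.
apply: le_trans (_ : \sum_(j in d) I i j + 1 <= _); first by rewrite lerD2l.
have I1 : I i j1 = 1 by rewrite /I fi j1f.
rewrite -nI [X in _ <= X](bigD1 j1) //= I1 addrC lerD2r.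
rewrite [X in X <= _]big_mkcond [X in _ <= X]big_mkcond /=.
apply: ler_sum => j _; case: ifP => jd; case: ifP => jj //.
  by move/eqP: jj => jj; subst; rewrite jd in j1d.
exact: I_ge0.
Qed.

Lemma sum_s (D : {set {set T}}) : partition D [set: T] ->
  \sum_(d in D) s d = #|C|%:R.
Proof.
case/and3P => /eqP covD trivD _.
rewrite /s -(@big_trivIset _ _ _ _ D _ trivD) covD.
rewrite -covC (@big_trivIset _ _ _ _ C _ trivC) -sumr_const.
apply: eq_bigr => c cC.
under eq_bigr => i ic do rewrite /n (fdef cC ic).
rewrite sumr_const -(mulr_natr (#|c|%:R^-1)) mulVf // pnatr_eq0 -lt0n.
apply/card_gt0P; case/and3P: HC => _ _ n0.
by apply/set0Pn; apply: contraNneq n0 => <-.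
Qed.


Lemma ratio (k : R) d : 0 < k -> d != set0 ->
  wgt (clique_graph C k) d / vol (clique_graph C k) d = X d / Y d.
Proof.
move=> k0 dn.
have E i j : clique_graph C k i j = k * I i j.
  by rewrite E_eq /I; case: ifP => _; rewrite ?mulr1 ?mulr0.
have wE : wgt (clique_graph C k) d = k * X d.
  rewrite /wgt /X mulr_sumr; apply: eq_bigr => i _; rewrite mulr_sumr.
  by apply: eq_bigr => j _; exact: E.
have vE : vol (clique_graph C k) d = k * Y d.
  rewrite /vol /Y mulr_sumr; apply: eq_bigr => i _; rewrite -nI mulr_sumr.
  by apply: eq_bigr => j _; exact: E.
by rewrite wE vE invfM mulrACA divff ?mul1r // gt_eqF.
Qed.

Lemma XYC d : d \in C -> X d = Y d.
Proof.
move=> dC; rewrite /X /Y; apply: eq_bigr => i id.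
rewrite -nI big_mkcond; apply: eq_bigr => j _.
by rewrite /I (fdef dC id); case: (j \in d).
Qed.

End Helpers.

Theorem lemma2 (R : realFieldType) (T : finType) (C : {set {set T}}) (k beta : R) :
  (0 < #|T|)%N ->
  clustering C ->
  0 < k ->
  0 < beta -> beta < 1 ->
  let E := clique_graph C k in
  let eps := Num.min beta (Num.min (1 - beta) (#|T|%:R)^-1) / 2 in
  forall D : {set {set T}}, clustering D ->
    (D = C ->
       \sum_(d in D) (wgt E d / vol E d - beta) = (1 - beta) * #|C|%:R) /\
    (D <> C ->
       \sum_(d in D) (wgt E d / vol E d - beta) < (1 - beta) * #|C|%:R - eps).
Proof.
move=> T0 HC k0 b0 b1 E eps D HD; rewrite /clustering in HC HD.
have nD d : d \in D -> d != set0.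
  by move=> dD; case/and3P: HD => _ _ n0; apply: contraNneq n0 => <-.
have rat d : d \in D -> wgt E d / vol E d = X R C d / Y R C d.
  by move=> dD; apply: ratio => //; apply: nD.
split.
  move=> DC; rewrite (eq_bigr (fun _ => 1 - beta)); last first.
    move=> d dD; rewrite rat // XYC -?DC // divff // gt_eqF // Ypos //.
    exact: nD.
  by rewrite sumr_const mulr_natr DC.
move=> DC.
set r := fun d => X R C d / Y R C d.
have rle1 d : d \in D -> r d <= 1.
  by move=> dD; rewrite /r ler_pdivrMr ?Ypos ?nD // mul1r K1.
have rles d : d \in D -> r d <= s R C d.
  by move=> dD; rewrite /r ler_pdivrMr ?Ypos ?nD // mulrC K2.
set Sr := \sum_(d in D) r d.
have Hsum : \sum_(d in D) (wgt E d / vol E d - beta) = Sr - beta * #|D|%:R.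
  rewrite sumrB sumr_const mulr_natr; congr (_ - _).
  by apply: eq_bigr => d dD; rewrite rat.
have Sm : Sr <= #|D|%:R.
  by apply: le_trans (ler_sum _ rle1) _; rewrite sumr_const.
have Sc : Sr <= #|C|%:R.
  by apply: le_trans (ler_sum _ rles) _; rewrite sum_s.
have u0 : 0 < (#|T|%:R : R)^-1 by rewrite invr_gt0 ltr0n.
have key : Sr <= #|C|%:R - (#|T|%:R)^-1 \/ Sr <= #|D|%:R - (#|T|%:R)^-1.
  case: (boolP [exists d in D, [exists i0 in d, [exists j0 in d, j0 \notin pblock C i0]]]).
    case/exists_inP => d dD /exists_inP [i0 i0d /exists_inP [j0 j0d nj]].
    left; have h := K3 R HC i0d j0d nj.
    have rd : r d <= s R C d - (#|T|%:R)^-1.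
      rewrite /r ler_pdivrMr ?Ypos ?nD // mulrBl [s R C d * _]mulrC.
      rewrite [_^-1 * _]mulrC; move: h; lra.
    have hs : \sum_(d' in D | d' != d) r d' <= \sum_(d' in D | d' != d) s R C d'.
      by apply: ler_sum => d' /andP[dD' _]; apply: rles.
    rewrite /Sr -(sum_s R HC HD) (bigD1 d) //= [X in _ <= X - _](bigD1 d) //=.
    lra.
  rewrite negb_exists_in => /forall_inP H1.
  have sub d i0 : d \in D -> i0 \in d -> forall j, j \in d -> j \in pblock C i0.
    move=> dD i0d j jd; apply/negPn; apply: contra (H1 d dD) => nj.
    by apply/exists_inP; exists i0 => //; apply/exists_inP; exists j.
  case: (boolP [exists d in D, [exists i0 in d, [exists j1, (j1 \in pblock C i0) && (j1 \notin d)]]]).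
    case/exists_inP => d dD /exists_inP [i0 i0d /existsP [j1 /andP[j1f j1d]]].
    right; have h := K4 R HC i0d (sub d i0 dD i0d) j1f j1d.
    have rd : r d <= 1 - (#|T|%:R)^-1.
      rewrite /r ler_pdivrMr ?Ypos ?nD // mulrBl mul1r.
      rewrite [_^-1 * _]mulrC; move: h; lra.
    have hs : \sum_(d' in D | d' != d) r d' <= \sum_(d' in D | d' != d) (1:R).
      by apply: ler_sum => d' /andP[dD' _]; apply: rle1.
    have -> : #|D|%:R = \sum_(d' in D) (1:R) by rewrite sumr_const.
    rewrite /Sr (bigD1 d) //= [X in _ <= X - _](bigD1 d) //=.
    lra.
  rewrite negb_exists_in => /forall_inP H2.
  exfalso; apply: DC.
  have eqd d i : d \in D -> i \in d -> d = pblock C i.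
    move=> dD id; apply/setP => j; apply/idP/idP => [jd|jf].
      exact: (sub d i).
    apply/negPn; apply: contra (H2 d dD) => nj.
    by apply/exists_inP; exists i => //; apply/existsP; exists j; rewrite jf nj.
  apply/setP => x; apply/idP/idP => xin.
    case/set0Pn: (nD x xin) => i ix; rewrite (eqd x i) //; exact: fC.
  have : x != set0 by case/and3P: HC => _ _ n0; apply: contraNneq n0 => <-.
  case/set0Pn => i ix.
  case/and3P: HD => /eqP covD _ _.
  have pD : pblock D i \in D by apply: pblock_mem; rewrite covD inE.
  have ip : i \in pblock D i by rewrite mem_pblock covD inE.
  by rewrite -(fdef HC xin ix) -(eqd _ _ pD ip).
rewrite Hsum.
have e1 : eps <= beta / 2 by rewrite /eps ler_pM2r ?invr_gt0 // ge_min lexx.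
have e2 : eps <= (1 - beta) / 2.
  by rewrite /eps ler_pM2r ?invr_gt0 // !ge_min lexx orbT.
have e3 : eps <= (#|T|%:R)^-1 / 2.
  by rewrite /eps ler_pM2r ?invr_gt0 // !ge_min lexx !orbT.
case: (ltngtP #|D| #|C|) => [lt|gt|eq].
- have h : (#|D|.+1)%:R <= #|C|%:R :> R by rewrite ler_nat.
  rewrite -natr1 in h.
  have : (1 - beta) * (#|D|%:R + 1) <= (1 - beta) * #|C|%:R.
    by apply: ler_wpM2l => //; lra.
  have : beta * #|D|%:R >= 0 by apply: mulr_ge0; [lra | apply: ler0n].
  move: key; lra.
- have h : (#|C|.+1)%:R <= #|D|%:R :> R by rewrite ler_nat.
  rewrite -natr1 in h.
  have : beta * (#|C|%:R + 1) <= beta * #|D|%:R.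
    by apply: ler_wpM2l => //; lra.
  lra.
- rewrite eq in key *; lra.
Qed.
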